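(* Let $E$ be a real Hilbert space with $\dim(E)\ge2$, $h\in E$ a unit vector, $f:\mathbb{R}_{\ge0}\to\mathbb{R}_{\ge0}$, and $C_f=\{x\in E\mid f(\|x_\perp\|)\le x_h\}$. Then $(E,\preceq_f)$, where $x\preceq_f y\iff y-x\in C_f$, is an oriented (additive) group if and only if $f(0)=0$ and $f(d)>0$ for all $d>0$.
   Context: For $x\in E$ write $x=x_h h+x_\perp$ with $x_h=(x,h)$ and $x_\perp$ orthogonal to $h$. An orientation is a reflexive, antisymmetric binary relation. An oriented additive group is an abelian group with an orientation $\preceq$ such that $x\preceq y$ implies $x+z\preceq y+z$ for all $x,y,z$. *)

(* Defs.v *)
From mathcomp Require Import all_boot all_order all_algebra.
From mathcomp Require Import reals.
Set Implicit Arguments. Unset Strict Implicit. Unset Printing Implicit Defensive.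
Import Order.TTheory GRing.Theory Num.Theory.
Local Open Scope ring_scope.

Section Hilbert.
Variables (R : realType) (E : lmodType R) (ip : E -> E -> R).

Definition is_inner_product : Prop :=
  [/\ (forall x y, ip x y = ip y x),
      (forall x y z, ip (x + y) z = ip x z + ip y z),
      (forall (a : R) x y, ip (a *: x) y = a * ip x y),
      (forall x, 0 <= ip x x) &
      (forall x, ip x x = 0 -> x = 0)].

Definition ipnorm (x : E) : R := Num.sqrt (ip x x).

Definition ip_cauchy (u : nat -> E) : Prop :=
  forall e : R, 0 < e -> exists N : nat, forall m n : nat,
    (N <= m)%N -> (N <= n)%N -> ipnorm (u m - u n) < e.

Definition ip_converges (u : nat -> E) (l : E) : Prop :=
  forall e : R, 0 < e -> exists N : nat, forall n : nat,
    (N <= n)%N -> ipnorm (u n - l) < e.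

Definition is_hilbert : Prop :=
  is_inner_product /\
  forall u : nat -> E, ip_cauchy u -> exists l, ip_converges u l.

Definition dim_ge2 : Prop :=
  exists u v : E, forall a b : R, a *: u + b *: v = 0 -> a = 0 /\ b = 0.

Definition comp_h (h x : E) : R := ip x h.
Definition perp_h (h x : E) : E := x - comp_h h x *: h.

Definition Cf (h : E) (f : R -> R) (x : E) : Prop :=
  f (ipnorm (perp_h h x)) <= comp_h h x.

Definition prec_f (h : E) (f : R -> R) (x y : E) : Prop := Cf h f (y - x).
End Hilbert.

Definition is_orientation (T : Type) (le : T -> T -> Prop) : Prop :=
  (forall x, le x x) /\ (forall x y, le x y -> le y x -> x = y).

Definition oriented_group (G : zmodType) (le : G -> G -> Prop) : Prop :=
  is_orientation le /\ (forall x y z : G, le x y -> le (x + z) (y + z)).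

(* Main.v *)
Require Import Defs.
From mathcomp Require Import all_boot all_order all_algebra.
From mathcomp Require Import reals.
From mathcomp Require Import lra.
Import Order.TTheory GRing.Theory Num.Theory.
Local Open Scope ring_scope.
Set Implicit Arguments.

Section S.
Variables (R : realType) (E : lmodType R) (ip : E -> E -> R).
Hypothesis HI : is_inner_product ip.

Lemma ipDl x y z : ip (x + y) z = ip x z + ip y z.
Proof. by case: HI => ? ? ? ? ?; auto. Qed.
Lemma ipZl a x y : ip (a *: x) y = a * ip x y.
Proof. by case: HI => ? ? ? ? ?; auto. Qed.
Lemma ipC x y : ip x y = ip y x.
Proof. by case: HI => ? ? ? ? ?; auto. Qed.
Lemma ip_ge0 x : 0 <= ip x x.
Proof. by case: HI => ? ? ? ? ?; auto. Qed.
Lemma ip_eq0 x : ip x x = 0 -> x = 0.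
Proof. by case: HI => ? ? ? ? ?; auto. Qed.
Lemma ip0l y : ip 0 y = 0.
Proof. by rewrite -(scale0r (0:E)) ipZl mul0r. Qed.
Lemma ipNl x y : ip (- x) y = - ip x y.
Proof. by rewrite -scaleN1r ipZl mulN1r. Qed.
Lemma ipBl x y z : ip (x - y) z = ip x z - ip y z.
Proof. by rewrite ipDl ipNl. Qed.
Lemma ipZr a x y : ip x (a *: y) = a * ip x y.
Proof. by rewrite ipC ipZl ipC. Qed.
Lemma ipNr x y : ip x (- y) = - ip x y.
Proof. by rewrite ipC ipNl ipC. Qed.

Lemma norm0 : ipnorm ip 0 = 0.
Proof. by rewrite /ipnorm ip0l sqrtr0. Qed.
Lemma normN x : ipnorm ip (- x) = ipnorm ip x.
Proof. by rewrite /ipnorm ipNl ipNr opprK. Qed.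
Lemma normZ a x : ipnorm ip (a *: x) = `|a| * ipnorm ip x.
Proof.
by rewrite /ipnorm ipZl ipZr mulrA -expr2 sqrtrM ?sqrtr_sqr // sqr_ge0.
Qed.
Lemma norm_eq0 x : ipnorm ip x = 0 -> x = 0.
Proof.
move=> H; apply: ip_eq0; apply/eqP; rewrite eq_le ip_ge0 andbT.
by rewrite -sqrtr_eq0; apply/eqP.
Qed.
End S.

Unset Implicit Arguments.

Theorem mainTheorem13 (R : realType) (E : lmodType R) (ip : E -> E -> R)
  (HE : is_hilbert ip) (Hdim : dim_ge2 E) (h : E) (Hh : ipnorm ip h = 1)
  (f : R -> R) (Hf : forall d : R, 0 <= d -> 0 <= f d) :
  oriented_group (prec_f ip h f) <->
  (f 0 = 0 /\ forall d : R, 0 < d -> 0 < f d).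
Proof.
case: HE => HI _.
have hh : ip h h = 1.
  by move: Hh; rewrite /ipnorm => /(congr1 (fun t => t ^+ 2)); rewrite sqr_sqrtr ?ip_ge0 // expr1n.
have C0 : Cf ip h f 0 <-> f 0 <= 0.
  by rewrite /Cf /perp_h /comp_h ip0l // scale0r subr0 norm0.
split.
- case=> [[Hr Ha] _].
  have f00 : f 0 = 0.
    apply/eqP; rewrite eq_le Hf // andbT; apply/C0.
    by have := Hr 0; rewrite /prec_f subrr.
  split=> // d d0; rewrite lt_def Hf ?ltW // andbT; apply/negP => /eqP fd0.
  have [w Hw] : exists w, perp_h ip h w != 0.
    case: Hdim => u [v Huv].
    case: (eqVneq (perp_h ip h u) 0) => Hu; last by exists u.
    case: (eqVneq (perp_h ip h v) 0) => Hv; last by exists v.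
    exfalso.
    move: Hu Hv; rewrite /perp_h => /eqP; rewrite subr_eq0 => /eqP Hu /eqP; rewrite subr_eq0 => /eqP Hv.
    have := Huv (comp_h ip h v) (- comp_h ip h u).
    have e : comp_h ip h v *: u + (- comp_h ip h u) *: v = 0.
      move: Hu Hv; set cu := comp_h ip h u; set cv := comp_h ip h v => Hu Hv.
      by rewrite {1}Hu {1}Hv !scalerA mulrC mulNr scaleNr subrr.
    case: (Huv _ _ e) => a b.
    have u0 : u = 0 by rewrite Hu; move/eqP: b; rewrite oppr_eq0 => /eqP ->; rewrite scale0r.
    have [] := Huv 1 0; first by rewrite scale0r addr0 scale1r u0.
    by move/eqP; rewrite oner_eq0.
  set n := ipnorm ip (perp_h ip h w).
  have n0 : n != 0 by apply: contra Hw => /eqP /norm_eq0 -> //.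
  have ngt0 : 0 < n by rewrite lt_def n0 sqrtr_ge0.
  set x := (d / n) *: perp_h ip h w.
  have cx : comp_h ip h x = 0.
    by rewrite /x /comp_h (ipZl HI) /perp_h (ipBl HI) (ipZl HI) hh mulr1 /comp_h subrr mulr0.
  have px : perp_h ip h x = x by rewrite /perp_h cx scale0r subr0.
  have nx : ipnorm ip x = d.
    by rewrite /x normZ // ger0_norm ?divr_ge0 ?ltW // mulrVK ?unitfE.
  have : x = 0.
    apply: Ha; rewrite /prec_f /Cf.
      by rewrite sub0r -scaleN1r /comp_h ipZl // -/(comp_h ip h x) cx mulr0 /perp_h -/(comp_h ip h (-1 *: x)) /comp_h ipZl // -/(comp_h ip h x) cx mulr0 scale0r subr0 scaleN1r normN // nx fd0.
    by rewrite subr0 px nx cx fd0.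
  by move=> x0; move: nx; rewrite x0 norm0 // => d0'; move: d0; rewrite -d0' ltxx.
- case=> f00 fpos; split; last by move=> x y z; rewrite /prec_f opprD addrA addrAC addrK.
  split; first by move=> x; rewrite /prec_f subrr; apply/C0; rewrite f00.
  move=> x y; rewrite /prec_f /Cf.
  have Nc z : comp_h ip h (- z) = - comp_h ip h z by rewrite /comp_h ipNl.
  have Np z : perp_h ip h (- z) = - perp_h ip h z by rewrite /perp_h Nc scaleNr opprD.
  rewrite -(opprB y x) Nc Np normN //.
  set c := comp_h ip h (y - x); set p := perp_h ip h (y - x) => H1 H2.
  have fn0 : f (ipnorm ip p) = 0.
    apply/eqP; rewrite eq_le Hf ?sqrtr_ge0 // andbT.
    move: H1 H2; set a := f _ => H1 H2; lra.
  have c0 : c = 0 by move: H1 H2; rewrite fn0 => H1 H2; lra.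
  have p0 : p = 0.
    apply: (norm_eq0 HI); apply/eqP; apply: contraT => pn.
    have : 0 < ipnorm ip p by rewrite lt_def pn sqrtr_ge0.
    by move/fpos; rewrite fn0 ltxx.
  apply/eqP; rewrite eq_sym -subr_eq0; apply/eqP.
  move: p0.
  by rewrite /p /perp_h -/c c0 scale0r subr0.
Qed.
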